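(* Let $J$ be an arbitrary graph and let $m\ge\chi(J)$ be an integer. Then there exists a graph $G$ such that (1) $J$ is an induced subgraph of $G$; (2) $\dim_l(G)=m$; and (3) there exists a local metric basis $B$ of $G$ with $B\cap V(J)=\emptyset$.
   Context: $\chi(J)$ is the chromatic number of $J$. For a connected graph $G$, a vertex $w$ distinguishes an edge $uv$ if $d(w,u)\neq d(w,v)$ (shortest-path distance); a local metric basis of $G$ is a minimum-size set of vertices such that every edge of $G$ is distinguished by one of them, and $\dim_l(G)$ is its size. *)

(* Defs.v *)
From mathcomp Require Import all_boot.
Set Implicit Arguments. Unset Strict Implicit. Unset Printing Implicit Defensive.

Section Graphs.
Variable V : finType.
Implicit Types (e : rel V).

Definition simple_graph e := symmetric e /\ irreflexive e.

Definition connected_graph e := forall x y : V, connect e x y.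

Fixpoint walk e (n : nat) (x y : V) : bool :=
  if n is n'.+1 then [exists z, e x z && walk e n' z y] else x == y.

(* shortest-path distance: least n with a walk of length n from x to y.
   In a connected graph it is < #|V|, so searching iota 0 #|V| is exact. *)
Definition dist e (x y : V) : nat := find (fun n => walk e n x y) (iota 0 #|V|).

Definition distinguishes e (w u v : V) : bool := dist e w u != dist e w v.

Definition local_resolving e (B : {set V}) : bool :=
  [forall u, forall v, e u v ==> [exists w in B, distinguishes e w u v]].

Definition local_metric_dim e : nat :=
  \big[minn/#|V|]_(B : {set V} | local_resolving e B) #|B|.

Definition local_metric_basis e (B : {set V}) : bool :=
  local_resolving e B && (#|B| == local_metric_dim e).

Definition colorable e (k : nat) : bool :=
  [exists c : {ffun V -> 'I_k}, [forall x, forall y, e x y ==> (c x != c y)]].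

(* chromatic number: least k with a proper k-colouring (k <= #|V| always
   suffices for a loopless graph) *)
Definition chromatic_number e : nat := find (colorable e) (iota 0 #|V|.+1).

End Graphs.

Definition induced_embedding (T V : finType) (eJ : rel T) (eG : rel V) (f : T -> V) :=
  injective f /\ forall x y, eG (f x) (f y) = eJ x y.

(* Main.v *)
Require Import Defs.
From mathcomp Require Import all_boot.
Set Warnings "-notation-overridden".

Lemma dist_univ (V : finType) (e : rel V) (h : V) :
  symmetric e -> irreflexive e -> (forall v, v != h -> e h v) -> 1 < #|V| ->
  forall x y, dist e x y = if x == y then 0 else if e x y then 1 else 2.
Proof.
move=> sym irr hu n2 x y; rewrite /dist.
have w1' : forall a b, walk e 1 a b = e a b.
  by move=> a b; rewrite /=; apply/existsP/idP => [[z /andP[exz /eqP <-]]|exy] //; exists b; rewrite exy eqxx.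
have w1 := w1' x y.
have w2 : x != y -> ~~ e x y -> walk e 2 x y.
  move=> nxy nexy.
  have xh : x != h.
    apply/eqP=> xh; subst x; move: nexy; rewrite hu //; by rewrite eq_sym.
  have yh : y != h.
    apply/eqP=> yh; subst y; move: nexy; rewrite sym hu //.
  apply/existsP; exists h; rewrite sym hu //=.
  by have := w1' h y; rewrite /= => ->; rewrite hu.
move: n2; case: #|V| => [|[|n]] // _.
have -> : iota 0 n.+2 = 0 :: 1 :: iota 2 n by [].
rewrite /= -/(walk e 1 x y) w1.
case: (eqVneq x y) => // nxy.
case: (boolP (e x y)) => // nexy.
by case: n => [|n] //=; rewrite -/(walk e 2 x y) w2.
Qed.

Lemma bigmin_le (I : eqType) (r : seq I) (P : pred I) (F : I -> nat) x0 i :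
  i \in r -> P i -> \big[minn/x0]_(j <- r | P j) F j <= F i.
Proof.
elim: r => [//|a r IH]; rewrite inE big_cons => /orP [/eqP <-| ir] Pi.
  by rewrite Pi geq_minl.
by case: (P a); [rewrite geq_min IH ?orbT | exact: IH].
Qed.

Lemma lmd_eq (V : finType) (e : rel V) (B : {set V}) m :
  local_resolving e B -> #|B| = m ->
  (forall B', local_resolving e B' -> m <= #|B'|) -> local_metric_dim e = m.
Proof.
rewrite /local_metric_dim => rB cB lb; apply/eqP; rewrite eqn_leq; apply/andP; split.
  by rewrite -cB; apply: bigmin_le => //; rewrite mem_index_enum.
apply: (big_ind (fun k => m <= k)).
- by rewrite -cB max_card.
- by move=> a b ha hb; rewrite leq_min ha hb.
- by move=> B' /lb.
Qed.

Lemma chrom_col (T : finType) (eJ : rel T) : irreflexive eJ ->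
  colorable eJ (chromatic_number eJ).
Proof.
move=> irr; rewrite /chromatic_number.
have hs : has (colorable eJ) (iota 0 #|T|.+1).
  apply/hasP; exists #|T|; first by rewrite mem_iota add0n ltnSn.
  apply/existsP; exists [ffun x => enum_rank x]; apply/forallP=> x; apply/forallP=> y.
  apply/implyP=> exy; rewrite !ffunE; apply/negP=> /eqP/enum_rank_inj exy'.
  by subst y; rewrite irr in exy.
have := nth_find 0 hs; rewrite nth_iota ?add0n //.
by move: hs; rewrite has_find size_iota.
Qed.

Lemma col_mono (T : finType) (eJ : rel T) k m : colorable eJ k -> k <= m -> colorable eJ m.
Proof.
move=> /existsP [c /forallP Hc] km; apply/existsP; exists [ffun x => widen_ord km (c x)].
apply/forallP=> x; apply/forallP=> y; apply/implyP=> exy; rewrite !ffunE.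
by move/forallP: (Hc x) => /(_ y) /implyP /(_ exy).
Qed.

Section Gen.
Variables (T X : finType) (eJ : rel T) (F : T -> X -> bool) (R : rel X).

Definition gr : rel (option (T + X)) := fun u v =>
  match u, v with
  | None, None => false
  | None, Some _ => true
  | Some _, None => true
  | Some (inl x), Some (inl y) => eJ x y
  | Some (inl x), Some (inr a) => F x a
  | Some (inr a), Some (inl x) => F x a
  | Some (inr a), Some (inr b) => R a b
  end.

Lemma gr_sym : symmetric eJ -> symmetric R -> symmetric gr.
Proof. by move=> sJ sR [[x|a]|] [[y|b]|] //=; try apply: sJ; try apply: sR. Qed.

Lemma gr_irr : irreflexive eJ -> irreflexive R -> irreflexive gr.
Proof. by move=> iJ iR [[x|a]|] //=. Qed.

Lemma gr_conn : connected_graph gr.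
Proof.
move=> u v; apply: (@connect_trans _ _ None).
  by case: u => [u|]; [apply: connect1; case: u | exact: connect0].
by case: v => [v|]; [apply: connect1; case: v | exact: connect0].
Qed.

Lemma gr_emb : induced_embedding eJ gr (fun x => Some (inl x)).
Proof. by split => // x y []. Qed.

Lemma gr_disj (B : {set option (T + X)}) : (forall x, Some (inl x) \notin B) ->
  [disjoint B & [set Some (inl x) | x : T]].
Proof.
move=> nB; rewrite disjoint_subset; apply/subsetP => u uB; rewrite inE.
apply/imsetP => [[x _ ux]]; subst u.
by rewrite (negbTE (nB x)) in uB.
Qed.

Definition D u v := if u == v then 0 else if gr u v then 1 else 2.

Hypotheses (sJ : symmetric eJ) (iJ : irreflexive eJ) (sR : symmetric R) (iR : irreflexive R).
Variable x0 : X.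

Lemma gr_dist u v : dist gr u v = D u v.
Proof.
apply: (@dist_univ _ gr None (gr_sym sJ sR) (gr_irr iJ iR)).
  by case.
rewrite card_option ltnS card_sum addn_gt0; apply/orP; right.
by apply/card_gt0P; exists x0.
Qed.

Lemma gr_res (B : {set option (T + X)}) :
  (forall u v, gr u v -> u \notin B -> v \notin B -> exists w, w \in B /\ D w u != D w v) ->
  local_resolving gr B.
Proof.
move=> H; apply/forallP => u; apply/forallP => v; apply/implyP => euv.
have uv : u != v by apply/eqP => uv; subst v; rewrite (gr_irr iJ iR) in euv.
case: (boolP (u \in B)) => uB.
  apply/existsP; exists u; rewrite uB /distinguishes !gr_dist /D eqxx (negbTE uv) euv //.
case: (boolP (v \in B)) => vB.
  apply/existsP; exists v; rewrite vB /distinguishes !gr_dist /D eqxx (eq_sym v u) (negbTE uv).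
  by rewrite (gr_sym sJ sR) euv.
have [w [wB Hw]] := H u v euv uB vB.
by apply/existsP; exists w; rewrite wB /distinguishes !gr_dist.
Qed.

Lemma res_edge (B : {set option (T + X)}) u v : local_resolving gr B -> gr u v ->
  exists w, w \in B /\ D w u != D w v.
Proof.
move=> /forallP /(_ u) /forallP /(_ v) /implyP H /H /existsP [w /andP [wB]].
by rewrite /distinguishes !gr_dist => ?; exists w.
Qed.

Lemma tri_lb (B : {set option (T + X)}) a b c :
  gr a b -> gr b c -> gr a c -> local_resolving gr B -> 2 <= #|B|.
Proof.
move=> ab bc ac rB.
have [w1 [w1B H1]] := res_edge _ _ _ rB ab.
have [w2 [w2B H2]] := res_edge _ _ _ rB bc.
have [w3 [w3B H3]] := res_edge _ _ _ rB ac.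
rewrite ltnNge; apply/negP => /card_le1_eqP Hle.
have e2 := Hle _ _ w1B w2B; have e3 := Hle _ _ w1B w3B; subst w2 w3.
have irr := gr_irr iJ iR; have sym := gr_sym sJ sR.
have neq : forall x y, gr x y -> (x == y) = false.
  by move=> x y xy; apply/eqP => exy; subst y; rewrite irr in xy.
have ba : gr b a by rewrite sym.
have cb : gr c b by rewrite sym.
have ca : gr c a by rewrite sym.
have nab := neq _ _ ab; have nba := neq _ _ ba; have nbc := neq _ _ bc.
have ncb := neq _ _ cb; have nac := neq _ _ ac; have nca := neq _ _ ca.
move: H1 H2 H3; rewrite /D.
case: (eqVneq w1 a) => [->|wa].
  by rewrite ?eqxx ?nab ?nac ?ab ?ac.
case: (eqVneq w1 b) => [->|wb].
  by rewrite ?eqxx ?nba ?nbc ?ba ?bc.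
case: (eqVneq w1 c) => [->|wc].
  by rewrite ?eqxx ?nca ?ncb ?ca ?cb.
by case: (gr w1 a); case: (gr w1 b); case: (gr w1 c).
Qed.

End Gen.
Arguments gr {T X}.
Arguments D {T X}.

Lemma pack (T X : finType) (eJ : rel T) F R (B : {set option (T + X)}) m :
  simple_graph eJ -> symmetric R -> irreflexive R ->
  local_resolving (gr eJ F R) B -> #|B| = m ->
  (forall B', local_resolving (gr eJ F R) B' -> m <= #|B'|) ->
  (forall x, Some (inl x) \notin B) ->
  exists (V : finType) (eG : rel V),
    [/\ simple_graph eG, connected_graph eG &
        exists f : T -> V,
          [/\ induced_embedding eJ eG f,
              local_metric_dim eG = m &
              exists B : {set V}, local_metric_basis eG B /\
                                  [disjoint B & [set f x | x : T]]]].
Proof.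
move=> [sJ iJ] sR iR rB cB lb nB.
exists (option (T + X)), (gr eJ F R); split.
- by split; [exact: gr_sym | exact: gr_irr].
- exact: gr_conn.
exists (fun x => Some (inl x)); have dimE := lmd_eq _ _ _ _ rB cB lb.
split => //; first exact: gr_emb.
exists B; split; first by rewrite /local_metric_basis rB cB dimE eqxx.
exact: gr_disj.
Qed.

Lemma ex_ord1 m (k : 'I_m) : 1 < m -> exists j : 'I_m, j != k.
Proof.
move=> m2; have : 0 < #|~: [set k]|.
  by rewrite -(leq_add2l #|[set k]|) cardsC cards1 card_ord.
by case/card_gt0P => j; rewrite !inE => jk; exists j.
Qed.

Lemma ex_ord2 m (i k : 'I_m) : 2 < m -> exists j : 'I_m, (j != i) && (j != k).
Proof.
move=> m2; have : 0 < #|~: [set i; k]|.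
  rewrite -(leq_add2l #|[set i; k]|) cardsC cards2 card_ord addn1.
  by apply: leq_ltn_trans m2; case: (_ != _).
by case/card_gt0P => j; rewrite !inE negb_or => jk; exists j.
Qed.

Theorem lemma8 (T : finType) (eJ : rel T) (m : nat) :
  simple_graph eJ ->
  chromatic_number eJ <= m ->
  exists (V : finType) (eG : rel V),
    [/\ simple_graph eG, connected_graph eG &
        exists f : T -> V,
          [/\ induced_embedding eJ eG f,
              local_metric_dim eG = m &
              exists B : {set V}, local_metric_basis eG B /\
                                  [disjoint B & [set f x | x : T]]]].
Proof.
move=> sJ hm; have [sJs iJ] := sJ.
have /existsP [c /forallP Hc] := col_mono _ _ _ _ (chrom_col _ _ iJ) hm.
have Hcol : forall x y, eJ x y -> c x != c y.
  by move=> x y exy; move/forallP: (Hc x) => /(_ y) /implyP /(_ exy).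
clear Hc hm.
case: m c Hcol => [|[|[|n]]] c Hcol.
-
  pose F := fun (_ : T) (_ : void) => false.
  pose R := fun (_ _ : void) => false.
  have rB : local_resolving (gr eJ F R) set0.
    apply/forallP => u; apply/forallP => v; apply/implyP.
    case: u => [[x|[]]|]; first by case: (c x).
    by case: v => [[y|[]]|] //; case: (c y).
  apply: (@pack T void eJ F R set0 0 sJ) => //.
  + by rewrite cards0.
  + by move=> x; rewrite inE.
-
  pose F := fun (_ : T) (_ : unit) => false.
  pose R := fun (_ _ : unit) => false.
  have rB : local_resolving (gr eJ F R) [set None].
    apply: (@gr_res T unit eJ F R sJs iJ _ _ tt) => //.
    move=> [[x|[]]|] [[y|[]]|] //=; rewrite ?inE //.
    move=> exy; have := Hcol x y exy; by rewrite (ord1 (c x)) (ord1 (c y)).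
  apply: (@pack T unit eJ F R [set None] 1 sJ) => //.
  + by rewrite cards1.
  + move=> B' rB'.
    have [w [wB _]] := @res_edge T unit eJ F R sJs iJ (fun _ _ => erefl) (fun _ => erefl) tt
                          B' None (Some (inr tt)) rB' erefl.
    by apply/card_gt0P; exists w.
  + by move=> x; rewrite inE.
-
  pose F := fun (x : T) (i : 'I_2) => c x == i.
  pose R := fun (i j : 'I_2) => i != j.
  have sR : symmetric R by move=> i j; rewrite /R eq_sym.
  have iR : irreflexive R by move=> i; rewrite /R eqxx.
  pose B := [set Some (inr i) | i : 'I_2] : {set option (T + 'I_2)}.
  have nB : forall x, Some (inl x) \notin B by move=> x; apply/imsetP => [[i _]].
  have nN : None \notin B by apply/imsetP => [[i _]].
  have iB : forall i, Some (inr i) \in B by move=> i; apply/imsetP; exists i.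
  have rB : local_resolving (gr eJ F R) B.
    apply: (@gr_res T _ eJ F R sJs iJ sR iR ord0).
    move=> [[x|i]|] [[y|j]|] e uB vB; rewrite ?iB // in uB vB.
    + exists (Some (inr (c x))); split => //.
      by rewrite /D /= /F eqxx (eq_sym (c y)) (negbTE (Hcol _ _ e)).
    + have [j jk] := @ex_ord1 2 (c x) erefl.
      exists (Some (inr j)); split => //.
      by rewrite /D /= /F (eq_sym (c _)) (negbTE jk).
    + have [j jk] := @ex_ord1 2 (c y) erefl.
      exists (Some (inr j)); split => //.
      by rewrite /D /= /F (eq_sym (c _)) (negbTE jk).
  apply: (@pack T _ eJ F R B 2 sJ) => //.
  + by rewrite card_imset ?card_ord // => i j [].
  + move=> B' rB'.
    have e01 : R ord0 (lift ord0 ord0) by [].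
    exact: (@tri_lb T _ eJ F R sJs iJ sR iR ord0 B' None (Some (inr ord0)) (Some (inr (lift ord0 ord0)))).
-
  pose F := fun (x : T) (p : 'I_n.+3 * bool) => c x != p.1.
  pose R := fun (p q : 'I_n.+3 * bool) => (p.1 == q.1) && (p.2 != q.2).
  have sR : symmetric R by move=> [i a] [j b]; rewrite /R /= eq_sym (eq_sym a).
  have iR : irreflexive R by move=> [i a]; rewrite /R /= !eqxx.
  pose B := [set Some (inr (i, true)) | i : 'I_n.+3] : {set option (T + ('I_n.+3 * bool))}.
  have nB : forall x, Some (inl x) \notin B by move=> x; apply/imsetP => [[i _]].
  have iB : forall i, Some (inr (i, true)) \in B by move=> i; apply/imsetP; exists i.
  have m3 : 2 < n.+3 by [].
  have eqSr : forall p q : 'I_n.+3 * bool,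
    (Some (inr p) == Some (inr q) :> option (T + ('I_n.+3 * bool))) = (p == q) by [].
  have rB : local_resolving (gr eJ F R) B.
    apply: (@gr_res T _ eJ F R sJs iJ sR iR (ord0, true)).
    move=> [[x|[i []]]|] [[y|[j []]]|] e uB vB; rewrite ?iB // in uB vB;
      move: e; rewrite /= /F /R ?andbF // => e.
    + exists (Some (inr (c x, true))); split => //.
      by rewrite /D /= /F eqxx (eq_sym (c y)) Hcol.
    + have [k /andP [kj kx]] := ex_ord2 _ j (c x) m3.
      exists (Some (inr (k, true))); split => //.
      by rewrite /D /= /F /R eqSr xpair_eqE andbF (eq_sym (c x)) kx (negbTE kj).
    + exists (Some (inr (c x, true))); split => //.
      by rewrite /D /= /F eqxx.
    + have [k /andP [ki ky]] := ex_ord2 _ i (c y) m3.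
      exists (Some (inr (k, true))); split => //.
      by rewrite /D /= /F /R eqSr xpair_eqE andbF (eq_sym (c y)) ky (negbTE ki).
    + have [k ki] := ex_ord1 _ i (ltnW m3).
      exists (Some (inr (k, true))); split => //.
      by rewrite /D /= /R eqSr xpair_eqE andbF (negbTE ki).
    + exists (Some (inr (c y, true))); split => //.
      by rewrite /D /= /F eqxx.
    + have [k kj] := ex_ord1 _ j (ltnW m3).
      exists (Some (inr (k, true))); split => //.
      by rewrite /D /= /R eqSr xpair_eqE andbF (negbTE kj).
  apply: (@pack T _ eJ F R B n.+3 sJ) => //.
  + by rewrite card_imset ?card_ord // => i j [].
  move=> B' rB'.
  have hit : forall i, exists b, Some (inr (i, b)) \in B'.
    move=> i.
    have e : gr eJ F R (Some (inr (i, true))) (Some (inr (i, false))) by rewrite /= /R eqxx.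
    have [w [wB Hw]] := @res_edge T _ eJ F R sJs iJ sR iR (ord0, true) B' _ _ rB' e.
    move: wB Hw; case: w => [[x|[j b]]|] wB; rewrite /D /= /F /R ?eqSr ?xpair_eqE.
    + by rewrite eqxx.
    + case: (eqVneq j i) => [ji|ji]; first by subst j; exists b.
      by [].
    + by [].
  pose proj := fun u : option (T + ('I_n.+3 * bool)) =>
    if u is Some (inr (i, _)) then Some i else None.
  have : [set Some i | i : 'I_n.+3] \subset proj @: B'.
    apply/subsetP => o /imsetP [i _ ->]; have [b hb] := hit i.
    by apply/imsetP; exists (Some (inr (i, b))).
  have cS : #|[set Some i | i : 'I_n.+3]| = n.+3.
    by rewrite card_imset ?card_ord // => ? ? [].
  move/subset_leq_card; rewrite cS => h; exact: leq_trans h (leq_imset_card _ _).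
Qed.
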